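(* Let $L$ be a free $O_p$-module of finite rank $t$, $\xi:L\to L$ an $O_p$-linear endomorphism, and $K\subseteq L$ an $O_p[\xi]$-submodule with $\xi(K)\subseteq p^nL$ and $L/K\cong\bigoplus_{i=1}^{t}O_p/p^{a_i}O_p$ with $n\ge a_1\ge a_2\ge\dots\ge a_t\ge0$. Put $b_i=n-a_i$ and $B(j)=\sum_{i=1}^jb_i$. Write the characteristic polynomial of $\xi$ on $L$ as $\det(X-\xi)=\sum_{s=0}^td_sX^{t-s}$. Then $d_s\equiv0\bmod p^{B(s)}$ for all $0\le s\le t$.
   Context: $O_p$ is the completion at $p$ of the ring of integers $O$ of an imaginary quadratic field in which the odd rational prime $p$ is inert (a complete discrete valuation ring with uniformizer $p$). *)

(* Defs.v *)
From HB Require Import structures.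
From mathcomp Require Import all_boot all_order all_algebra.
Set Implicit Arguments. Unset Strict Implicit. Unset Printing Implicit Defensive.
Import Order.TTheory GRing.Theory Num.Theory.
Local Open Scope ring_scope.

Definition divr {R : comNzRingType} (y x : R) : Prop := exists c : R, x = y * c.

(* The ring R is (isomorphic to) O_p, the completion at an inert odd prime p
   of the ring of integers of an imaginary quadratic field.  Such a ring is
   characterized (Cohen structure theorem / Witt vectors W(F_{p^2})) by:
   - R is a discrete valuation ring with uniformizer p
     (p is a nonzero non-unit and every nonzero element is a unit times a
      power of p);
   - R is complete for the p-adic topology;
   - the residue field R/pR has exactly p^2 elements (p inert).  *)
Definition is_Op (p : nat) (R : idomainType) : Prop :=
  [/\ prime p /\ odd p,
      (p%:R : R) != 0 /\ (p%:R : R) \isn't a GRing.unit,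
      (forall x : R, x != 0 ->
          exists (u : R) (k : nat), u \is a GRing.unit /\ x = u * (p%:R) ^+ k),
      (forall u : nat -> R,
          (forall k, divr ((p%:R : R) ^+ k) (u k.+1 - u k)) ->
          exists x : R, forall k, divr ((p%:R : R) ^+ k) (x - u k))
    &
      (exists s : seq R, [/\ size s = (p ^ 2)%N,
          (forall x : R, exists2 y, y \in s & divr (p%:R : R) (x - y)) &
          (forall i j, (i < size s)%N -> (j < size s)%N ->
             divr (p%:R : R) (nth 0 s i - nth 0 s j) -> i = j)])].

(* The submodule D = ⊕_i p^{a_i} R of R^t, so that R^t / D = ⊕_i R/p^{a_i}R *)
Definition in_diag_sub {R : comNzRingType} (p : nat) (t : nat) (a : 'I_t -> nat)
  (x : 'rV[R]_t) : Prop := forall i : 'I_t, divr ((p%:R : R) ^+ a i) (x 0 i).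

(* Main.v *)
Require Import Defs.
From HB Require Import structures.
From mathcomp Require Import all_boot all_order all_algebra all_fingroup zify.
Import Order.TTheory GRing.Theory Num.Theory.
Local Open Scope ring_scope.

Section Dv.
Variable R : comNzRingType.
Implicit Types x y z : R.
Lemma dv0 y : divr y 0. Proof. by exists 0; rewrite mulr0. Qed.
Lemma dvD y u v : divr y u -> divr y v -> divr y (u + v).
Proof. by move=> [c ->] [e ->]; exists (c + e); rewrite mulrDr. Qed.
Lemma dvN y u : divr y u -> divr y (- u).
Proof. by move=> [c ->]; exists (- c); rewrite mulrN. Qed.
Lemma dvB y u v : divr y u -> divr y v -> divr y (u - v).
Proof. move=> hu hv; apply: dvD => //; exact: dvN. Qed.
Lemma dvMr y u c : divr y u -> divr y (u * c).
Proof. by move=> [e ->]; exists (e * c); rewrite mulrA. Qed.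
Lemma dvMl y u c : divr y u -> divr y (c * u).
Proof. by move=> h; rewrite mulrC; apply: dvMr. Qed.
Lemma dv_le x k l u : (k <= l)%N -> divr (x ^+ l) u -> divr (x ^+ k) u.
Proof.
move=> kl [c ->]; exists (x ^+ (l - k) * c).
by rewrite mulrA -exprD subnKC.
Qed.
Lemma dvX0 x u : divr (x ^+ 0) u.
Proof. by exists u; rewrite expr0 mul1r. Qed.
Lemma dvMM x k l u v : divr (x ^+ k) u -> divr (x ^+ l) v -> divr (x ^+ (k + l)) (u * v).
Proof. by move=> [c ->] [e ->]; exists (c * e); rewrite exprD mulrACA. Qed.
Lemma dv_sum y (I : Type) (r : seq I) (P : pred I) (F : I -> R) :
  (forall i, P i -> divr y (F i)) -> divr y (\sum_(i <- r | P i) F i).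
Proof.
move=> h; elim/big_rec: _ => [|i s Pi hs]; first exact: dv0.
by apply: dvD; [exact: h | exact: hs].
Qed.
Lemma dv_sign y u (k : nat) : divr y u -> divr y ((-1) ^+ k * u).
Proof. by move=> h; apply: dvMl. Qed.
End Dv.

Lemma lemC (R : comNzRingType) (pp : R) (al be : nat -> R) (bb : nat -> nat)
 (hb : forall i j, (i <= j)%N -> (bb i <= bb j)%N)
 (hbe : forall i, divr (pp ^+ bb i) (be i)) :
 forall m s, (s <= m)%N -> divr (pp ^+ (\sum_(i < s) bb i))
   ((\prod_(i < m) ('X * (al i)%:P - (be i)%:P))`_(m - s)).
Proof.
elim=> [|m IH] s hs.
  move: hs; rewrite leqn0 => /eqP ->; rewrite big_ord0; exact: dvX0.
rewrite big_ord_recr /= mulrBr coefB mulrA coefMC coefMX coefMC.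
case: s hs => [|s] hs; first by rewrite big_ord0; exact: dvX0.
rewrite subSS; apply: dvB.
  case: eqP => [_|/eqP hne]; first by rewrite mul0r; exact: dv0.
  apply: dvMr; have hsm : (s.+1 <= m)%N by move: hne; rewrite subn_eq0 -ltnNge.
  by rewrite -subnS; apply: IH.
rewrite big_ord_recr /=; apply: dvMM; first by apply: IH; rewrite -ltnS.
apply: dv_le (hbe m); apply: hb; by rewrite -ltnS.
Qed.

Section Main.
Variables (R : idomainType) (pp : R) (hp : pp != 0) (t n : nat) (xi : 'M[R]_t)
  (K : 'rV[R]_t -> Prop) (a : 'I_t -> nat).
Hypothesis hxiK : forall v, K v -> exists w : 'rV[R]_t, v *m xi = pp ^+ n *: w.
Hypothesis ha_n : forall i : 'I_t, (a i <= n)%N.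
Hypothesis ha_dec : forall i j : 'I_t, (i <= j)%N -> (a j <= a i)%N.
Variables (s : nat) (hs : (s <= t)%N).

Definition Good (X : 'M[R]_t) :=
  divr (pp ^+ (\sum_(i < t | (i < s)%N) (n - a i)%N)) (\det X * (char_poly xi)`_(t - s)).

Lemma cancel_row (k : nat) (u w : 'rV[R]_t) : pp ^+ k *: u = pp ^+ k *: w -> u = w.
Proof.
move=> h; apply/rowP => j; move/rowP/(_ j): h; rewrite !mxE => /mulfI; apply.
exact: expf_neq0.
Qed.

Lemma lemB (Y : 'M[R]_t) : (forall i, K (pp ^+ a i *: row i Y)) -> Good Y.
Proof.
move=> hY.
have hW : forall i, exists w : 'rV_t, row i Y *m xi = pp ^+ (n - a i) *: w.
  move=> i; have [w hw] := hxiK _ (hY i).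
  exists w; apply: (@cancel_row (a i)).
  by rewrite scalerA -exprD subnKC ?ha_n // -hw scalemxAl.
have [W hW'] := fin_all_exists hW.
have hE : forall i j, (Y *m xi) i j = pp ^+ (n - a i) * W i 0 j.
  move=> i j; have := congr1 (fun M : 'rV_t => M 0 j) (hW' i).
  by rewrite -row_mul !mxE.
have hchar : (\det Y)%:P * char_poly xi =
    \det ('X *: map_mx polyC Y - map_mx polyC (Y *m xi)).
  by rewrite /char_poly -det_map_mx -det_mulmx /char_poly_mx mulmxBr mul_mx_scalar map_mxM.
rewrite /Good -coefCM hchar /determinant coef_sum; apply: dv_sum => sg _.
have -> : forall (q : {poly R}) (k : nat), ((-1) ^+ k * q)`_(t - s) = (-1) ^+ k * q`_(t - s).
  by move=> q k; rewrite -coefCM rmorphXn rmorphN rmorph1.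
apply: dvMl.
pose al (k : nat) := if insub k is Some i then Y i (sg i) else 0.
pose be (k : nat) := if insub k is Some i then (Y *m xi) i (sg i) else 0.
pose bb (k : nat) := if insub k is Some i then (n - a i)%N else n.
rewrite (eq_bigr (fun i : 'I_t => 'X * (al i)%:P - (be i)%:P)); last first.
  by move=> i _; rewrite /al /be valK !mxE mulrC.
have -> : (\sum_(i < t | (i < s)%N) (n - a i)%N = \sum_(i < s) bb i)%N.
  rewrite (eq_bigr (fun i : 'I_t => bb i)); last by move=> i _; rewrite /bb valK.
  have := @big_nat_widen nat 0%N addn 0 s t xpredT bb hs.
  rewrite !big_mkord => ->; apply: eq_bigl => i; by [].
apply: lemC => //.
  move=> i j hij; rewrite /bb.
  case: insubP => [i' _ hi|hi]; case: insubP => [j' _ hj|hj] //.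
  - by apply: leq_sub2l; apply: ha_dec; rewrite hi hj.
  - by rewrite leq_subr.
  - by move: hi; rewrite -hj in hij; rewrite (leq_ltn_trans hij (valP j')).
move=> k; rewrite /bb /be; case: insubP => [i _ _|_]; last exact: dv0.
by rewrite hE; exists (W i 0 (sg i)).
Qed.

Hypothesis hKZ : forall (c : R) v, K v -> K (c *: v).

Lemma lemA (X : 'M[R]_t) (sg : {perm 'I_t}) :
  (forall j, K (pp ^+ a (sg j) *: row j X)) -> Good X.
Proof.
move=> hX.
have hY : Good (row_perm (sg^-1)%g X).
  apply: lemB => i.
  have -> : row i (row_perm (sg^-1)%g X) = row ((sg^-1)%g i) X by apply/rowP => j; rewrite !mxE.
  by have := hX ((sg^-1)%g i); rewrite permKV.
have hXe : \det X = \det (perm_mx sg) * \det (row_perm (sg^-1)%g X).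
  by rewrite -det_mulmx -row_permE -row_permM (mulgV sg) row_perm1.
by rewrite /Good hXe -mulrA; apply: dvMl; exact: hY.
Qed.

Definition rset (X : 'M[R]_t) (r : 'I_t) (u : 'rV[R]_t) : 'M[R]_t :=
  \matrix_(j, k) (if j == r then u 0 k else X j k).

Lemma rset_row X r u : row r (rset X r u) = u.
Proof. by apply/rowP => k; rewrite !mxE eqxx. Qed.
Lemma rset_row' X r u : row' r (rset X r u) = row' r X.
Proof. by apply/matrixP => j k; rewrite !mxE; have /negbTE -> : lift r j != r by rewrite eq_sym neq_lift. Qed.
Lemma rset_rowj X r u j : j != r -> row j (rset X r u) = row j X.
Proof. by move=> h; apply/rowP => k; rewrite !mxE (negbTE h). Qed.

Lemma comb X r u w c e : Good (rset X r u) -> Good (rset X r w) ->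
  Good (rset X r (c *: u + e *: w)).
Proof.
move=> hu hw; rewrite /Good.
rewrite (@determinant_multilinear _ _ _ (rset X r u) (rset X r w) r c e).
- by rewrite mulrDl; apply: dvD; rewrite -mulrA; apply: dvMl.
- by rewrite !rset_row.
- by rewrite !rset_row'.
- by rewrite !rset_row'.
Qed.

Lemma good_sum X r (F : 'I_t -> 'rV[R]_t) (c : 'I_t -> R) :
  (forall i, Good (rset X r (F i))) -> Good (rset X r (\sum_i c i *: F i)).
Proof.
move=> hF; elim/big_rec: _ => [|i x _ hx].
  rewrite /Good (@determinant_multilinear _ _ _ (rset X r 0) (rset X r 0) r 0 0).
  - by rewrite !mul0r addr0 mul0r; apply: dv0.
  - by rewrite rset_row !scale0r addr0.
  - by []. - by [].
by have := comb X r (F i) x (c i) 1 (hF i) hx; rewrite scale1r.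
Qed.

Variables (v : 'I_t -> 'rV[R]_t).
Hypothesis hv : forall i, K (pp ^+ a i *: v i).
Hypothesis hdec : forall u, exists c : 'I_t -> R, K (u - \sum_i c i *: v i).

Definition Claim (r : nat) := forall X (sg : {perm 'I_t}),
  (forall j : 'I_t, (j < r)%N -> row j X = v (sg j) \/ K (row j X)) -> Good X.

Lemma claim_t : Claim t.
Proof.
move=> X sg h; apply: (lemA X sg) => j.
by case: (h j (ltn_ord j)) => [->|hk]; [exact: hv | exact: hKZ].
Qed.

Lemma claim_step r (hr : (r < t)%N) : Claim r.+1 -> Claim r.
Proof.
move=> IH X sg h; pose r' := Ordinal hr.
have -> : X = rset X r' (row r' X).
  by apply/matrixP => j k; rewrite /rset !mxE; case: eqP => // ->.
have [c hc] := hdec (row r' X).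
set kk := row r' X - \sum_i c i *: v i.
have -> : row r' X = 1 *: (\sum_i c i *: v i) + 1 *: kk.
  by rewrite !scale1r /kk addrC subrK.
apply: (comb X r' (\sum_i c i *: v i) kk 1 1).
  apply: (good_sum X r' v c) => i.
  pose j0 := (sg^-1)%g i.
  have hsj0 : sg j0 = i by rewrite /j0 permKV.
  case hcase: ((j0 < r)%N && (row j0 X == v (sg j0))).
    move/andP: hcase => [hj0 /eqP hrow].
    have hne : j0 != r' by apply/eqP => e; move: hj0; rewrite e /= ltnn.
    rewrite /Good (@determinant_alternate _ _ _ j0 r') ?mul0r; first exact: dv0.
      exact: hne.
    move=> k; rewrite /rset !mxE eqxx (negbTE hne).
    by have := congr1 (fun M : 'rV_t => M 0 k) hrow; rewrite !mxE => ->; rewrite hsj0.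
  apply: (IH _ ((tperm r' j0) * sg)%g) => j hj.
  case: (eqVneq j r') => [->|hjr].
    by left; rewrite rset_row permM tpermL hsj0.
  have hjr' : (j < r)%N.
    by move: hj; rewrite ltnS leq_eqVlt => /orP [/eqP e|] //; case/eqP: hjr; apply: val_inj.
  rewrite rset_rowj //.
  case: (eqVneq j j0) => [ej|hjj0].
    right; case: (h j hjr') => // hr2.
    by move: hcase; rewrite -ej hjr' hr2 eqxx.
  by rewrite permM tpermD 1?eq_sym //; exact: h.
apply: IH => j hj; case: (eqVneq j r') => [->|hjr]; first by right; rewrite rset_row.
rewrite rset_rowj //; apply: h.
by move: hj; rewrite ltnS leq_eqVlt => /orP [/eqP e|] //; case/eqP: hjr; apply: val_inj.
Qed.

Lemma claim0 : Claim 0.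
Proof.
suff H : forall k, Claim (t - k) by have := H t; rewrite subnn.
elim=> [|k IH]; first by rewrite subn0; exact: claim_t.
case: (ltnP k t) => hk.
  have e : (t - k = (t - k.+1).+1)%N by lia.
  apply: claim_step; first by lia.
  by rewrite -e.
by have -> : (t - k.+1 = t - k)%N by lia.
Qed.

Lemma good1 : divr (pp ^+ (\sum_(i < t | (i < s)%N) (n - a i)%N)) ((char_poly xi)`_(t - s)).
Proof.
have := claim0 (1%:M) 1%g; rewrite /Good det1 mul1r; apply.
by move=> j; rewrite ltn0.
Qed.
End Main.

Theorem lemma4p2 (p : nat) (R : idomainType) (hOp : is_Op p R)
  (t : nat) (xi : 'M[R]_t) (K : 'rV[R]_t -> Prop) (n : nat) (a : 'I_t -> nat)
  (* K is an O_p[xi]-submodule of L *)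
  (hK0 : K 0)
  (hKD : forall v w, K v -> K w -> K (v + w))
  (hKZ : forall (c : R) v, K v -> K (c *: v))
  (hKxi : forall v, K v -> K (v *m xi))
  (* xi(K) ⊆ p^n L *)
  (hxiK : forall v, K v -> exists w : 'rV[R]_t, v *m xi = (p%:R : R) ^+ n *: w)
  (* n >= a_1 >= a_2 >= ... >= a_t >= 0 *)
  (ha_n : forall i : 'I_t, (a i <= n)%N)
  (ha_dec : forall i j : 'I_t, (i <= j)%N -> (a j <= a i)%N)
  (* L/K ≅ ⊕_i O_p/p^{a_i}: an O_p-linear map phi : L -> O_p^t whose composite
     with the projection O_p^t -> ⊕_i O_p/p^{a_i} is surjective with kernel K *)
  (hquot : exists phi : 'rV[R]_t -> 'rV[R]_t,
      [/\ forall v w, phi (v + w) = phi v + phi w,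
          forall (c : R) v, phi (c *: v) = c *: phi v,
          forall y, exists v, in_diag_sub p a (phi v - y)
        & forall v, in_diag_sub p a (phi v) <-> K v]) :
  forall s : nat, (s <= t)%N ->
    divr ((p%:R : R) ^+ (\sum_(i < t | (i < s)%N) (n - a i)%N))
         ((char_poly xi)`_(t - s)).
Proof.
move=> s hs.
case: hOp => _ [hp _] _ _ _.
case: hquot => phi [phiD phiZ phisurj phiK].
have phi0 : phi 0 = 0 by have := phiZ 0 0; rewrite !scale0r.
have phiB : forall x y, phi (x - y) = phi x - phi y.
  by move=> x y; rewrite phiD -scaleN1r phiZ scaleN1r.
have phiS : forall (F : 'I_t -> 'rV_t) (c : 'I_t -> R),
    phi (\sum_i c i *: F i) = \sum_i c i *: phi (F i).
  move=> F c; elim/big_rec2: _ => [|i x y _ e]; first by rewrite phi0.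
  by rewrite -?e phiD phiZ ?e.
have [v hv] := fin_all_exists (fun i : 'I_t => phisurj (delta_mx 0 i)).
apply: (good1 _ _ hp _ _ _ _ _ hxiK ha_n ha_dec _ hs hKZ v).
  move=> i; apply/phiK => i'; rewrite phiZ mxE.
  have [z hz] := hv i i'.
  case: (eqVneq i' i) => [->|ne]; first by exists (phi (v i) 0 i).
  move: hz; rewrite !mxE eqxx (negbTE ne) /= subr0 => ->.
  by exists (p%:R ^+ a i * z); rewrite mulrCA.
move=> u; exists (fun i => phi u 0 i); apply/phiK => i'.
rewrite phiB phiS.
have -> : phi u - \sum_i phi u 0 i *: phi (v i) =
    - \sum_i phi u 0 i *: (phi (v i) - delta_mx 0 i).
  rewrite (eq_bigr _ (fun i _ => scalerBr _ _ _)) sumrB -row_sum_delta.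
  by rewrite opprB.
rewrite mxE summxE; apply: dvN; apply: dv_sum => i _.
by rewrite mxE; apply: dvMl; exact: hv.
Qed.
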